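(* Let $\mathcal L$ be a geometric lattice, $(\mathcal E,\iota)$ a modular extension of $\mathcal L$, and $F$ a modular coatom of $\mathcal L$. Let $P=\mathcal L\cup_{[\hat0,F]}\mathcal E=\{(A,B)\in\mathcal L\times\mathcal E:\ A\wedge F=\iota^{-1}(B\wedge\iota(F))\}$ with the order induced from $\mathcal L\times\mathcal E$ (a geometric lattice). Then the subset $\mathcal M=\{(A,B)\in P:\ \exists H\in\mathrm{At}(\mathcal L)\text{ with }H\not\le F,\ H\le A,\ \iota(H)\le B\}$ is a modular cut of $P$.
   Context: A geometric lattice is a finite lattice (bottom $\hat0$, top $\hat1$, join $\vee$, meet $\wedge$) which is ranked (rank function $\mathrm{rk}$), atomic and semimodular ($\mathrm{rk}(F_1\wedge F_2)+\mathrm{rk}(F_1\vee F_2)\le\mathrm{rk}(F_1)+\mathrm{rk}(F_2)$); its elements are called flats, its rank-one elements atoms ($\mathrm{At}(\mathcal L)$), and a coatom is a flat of rank $\mathrm{rk}(\hat1)-1$. A flat $F$ is modular if $\mathrm{rk}(F\wedge F')+\mathrm{rk}(F\vee F')=\mathrm{rk}(F)+\mathrm{rk}(F')$ for every flat $F'$. An embedding of geometric lattices is an injective order-preserving map preserving joins and sending atoms to atoms. A modular extension of $\mathcal L$ is a pair $(\mathcal E,\iota)$ with $\mathcal E$ a geometric lattice and $\iota:\mathcal L\to\mathcal E$ an embedding whose image is an interval $[\hat0,F_\iota]$ with $F_\iota$ modular in $\mathcal E$. A modular cut of a geometric lattice $P$ is a subset $\mathcal M\subseteq P$ which is upward closed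 and such that whenever $X,Y\in\mathcal M$ satisfy $\mathrm{rk}(X)+\mathrm{rk}(Y)=\mathrm{rk}(X\wedge Y)+\mathrm{rk}(X\vee Y)$, then $X\wedge Y\in\mathcal M$. *)

(* Defs.v *)
From mathcomp Require Import all_boot all_order.
Set Implicit Arguments. Unset Strict Implicit. Unset Printing Implicit Defensive.
Import Order.Theory.

Section Generic.
Variables (T : finType) (le : rel T).

Definition is_chain (A : {set T}) : bool :=
  [forall x in A, forall y in A, le x y || le y x].

(* Rank (height): one less than the maximal size of a chain of elements
   below x; for a ranked lattice this is the usual rank with rk(bot)=0. *)
Definition rk (x : T) : nat :=
  (\max_(A : {set T} | is_chain A && [forall y in A, le y x]) #|A|).-1.

Definition lt_ (x y : T) : bool := le x y && ~~ le y x.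

Definition covers (x y : T) : bool :=
  lt_ x y && [forall z, ~~ (lt_ x z && lt_ z y)].

Definition is_meet (x y z : T) : bool :=
  [&& le z x, le z y & [forall w, (le w x && le w y) ==> le w z]].
Definition is_join (x y z : T) : bool :=
  [&& le x z, le y z & [forall w, (le x w && le y w) ==> le z w]].

(* Modular cut of the lattice (T, le): upward closed, and closed under meets
   of modular pairs. *)
Definition modular_cut (M : pred T) : Prop :=
  (forall X Y, M X -> le X Y -> M Y) /\
  (forall X Y Z W, M X -> M Y -> is_meet X Y Z -> is_join X Y W ->
     rk X + rk Y = rk Z + rk W -> M Z).
End Generic.

Section Lattices.
Context {d : Order.disp_t} (L : finTBLatticeType d).
Local Notation rkL := (rk (<=%O : rel L)).

Definition atom (a : L) : bool := rkL a == 1.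

Definition ranked : Prop :=
  forall x y : L, covers (<=%O : rel L) x y -> rkL y = (rkL x).+1.

Definition atomic : Prop :=
  forall x : L, x = (\join_(a : L | atom a && (a <= x)) a)%O.

Definition semimodular : Prop :=
  forall x y : L, rkL (x `&` y)%O + rkL (x `|` y)%O <= rkL x + rkL y.

Definition geometric : Prop := [/\ ranked, atomic & semimodular].

Definition modular_flat (F : L) : Prop :=
  forall F' : L, rkL (F `&` F')%O + rkL (F `|` F')%O = rkL F + rkL F'.

Definition coatom (F : L) : Prop := rkL F = (rkL \top%O).-1.
End Lattices.

Section Ext.
Context {dL dE : Order.disp_t} {L : finTBLatticeType dL} {E : finTBLatticeType dE}.

Definition embedding (iota : L -> E) : Prop :=
  [/\ injective iota,
      {homo iota : x y / (x <= y)%O},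
      {morph iota : x y / (x `|` y)%O} &
      forall a : L, atom a -> atom (iota a)].

(* (E, iota) is a modular extension of L (E itself geometric is a separate
   hypothesis). *)
Definition modular_extension (iota : L -> E) : Prop :=
  embedding iota /\
  exists Fi : E, modular_flat Fi /\
    (forall y : E, (exists x : L, iota x = y) <-> (y <= Fi)%O).

(* P = L u_{[0,F]} E : pairs (A,B) with A /\ F = iota^{-1}(B /\ iota F),
   i.e. (iota injective) iota (A /\ F) = B /\ iota F. *)
Definition inP (iota : L -> E) (F : L) (p : L * E) : bool :=
  iota (p.1 `&` F)%O == (p.2 `&` iota F)%O.

Definition Pty (iota : L -> E) (F : L) := {p : L * E | inP iota F p}.

Definition Ple (iota : L -> E) (F : L) : rel (Pty iota F) :=
  fun X Y => ((val X).1 <= (val Y).1)%O && ((val X).2 <= (val Y).2)%O.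

Definition Mpred (iota : L -> E) (F : L) : pred (Pty iota F) :=
  fun X => [exists H : L, [&& atom H, ~~ (H <= F)%O,
                              (H <= (val X).1)%O & (iota H <= (val X).2)%O]].
End Ext.

Arguments Ple {dL dE L E} iota F.
Arguments Mpred {dL dE L E} iota F.

(* Main.v *)
Require Import Defs.
From mathcomp Require Import all_boot all_order zify.
Set Implicit Arguments. Unset Strict Implicit. Unset Printing Implicit Defensive.
Import Order.Theory.

Section Gen.
Variables (T : finType) (le : rel T).
Hypotheses (lerefl : reflexive le) (letr : transitive le) (leanti : antisymmetric le).

Lemma rk_chain (x : T) (C : {set T}) : is_chain le C -> [forall y in C, le y x] ->
  #|C| <= (rk le x).+1.
Proof.
move=> hc hb; rewrite /rk.
apply: leq_trans (leqSpred _).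
by apply: (leq_bigmax_cond (F := fun A : {set T} => #|A|)); rewrite hc hb.
Qed.

Lemma rk_ex (x : T) : exists C : {set T},
  [/\ is_chain le C, [forall y in C, le y x] & #|C| = (rk le x).+1].
Proof.
have hx : is_chain le [set x] && [forall y in [set x], le y x].
  apply/andP; split; first by apply/forallP=> a; apply/implyP=> /set1P->;
    apply/forallP=> b; apply/implyP=> /set1P->; rewrite lerefl.
  by apply/forallP=> a; apply/implyP=> /set1P->.
have hA : 0 < #|[pred A : {set T} | is_chain le A && [forall y in A, le y x]]|.
  by apply/card_gt0P; exists [set x]; rewrite inE.
have [C hC hm] := eq_bigmax_cond (fun A : {set T} => #|A|) hA.
exists C; move: hC; rewrite unfold_in => /andP[h1 h2]; split => //.
rewrite /rk.
have -> : \max_(A : {set T} | is_chain le A && [forall y in A, le y x]) #|A| = #|C| by exact: hm.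
have : 1 <= #|C|.
  have : #|[set x]| <= \max_(i in [pred A : {set T} | is_chain le A && [forall y in A, le y x]]) #|i|.
    by apply: leq_bigmax_cond; rewrite inE.
  by rewrite hm cards1.
by case: #|C|.
Qed.

Lemma rk_lt (x y : T) : le x y -> x != y -> rk le x < rk le y.
Proof.
move=> hxy hne; have [C [hc hb hs]] := rk_ex x.
have hyC : y \notin C.
  apply/negP=> hy; move/forallP: hb => /(_ y); rewrite hy /= => hyx.
  by move/eqP: hne; apply; apply: leanti; rewrite hxy hyx.
have := rk_chain (x := y) (C := y |: C).
rewrite cardsU1 hyC hs add1n ltnS; apply.
  apply/forallP=> a; apply/implyP=> /setU1P[->|ha];
  apply/forallP=> b; apply/implyP=> /setU1P[->|hb'].
  - by rewrite lerefl.
  - by move/forallP: hb => /(_ b); rewrite hb' /= => hbx; rewrite (letr hbx hxy) orbT.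
  - by move/forallP: hb => /(_ a); rewrite ha /= => hax; rewrite (letr hax hxy).
  - by move/forallP: hc => /(_ a); rewrite ha /= => /forallP/(_ b); rewrite hb'.
apply/forallP=> a; apply/implyP=> /setU1P[->|ha]; first by rewrite lerefl.
by move/forallP: hb => /(_ a); rewrite ha /= => hax; exact: letr hax hxy.
Qed.

Lemma rk_le (x y : T) : le x y -> rk le x <= rk le y.
Proof.
move=> hxy; case: (eqVneq x y) => [->//|hne].
by apply: ltnW; apply: rk_lt.
Qed.

Lemma rk_ub (f : T -> nat) (x : T) :
  (forall a b, le a b -> a != b -> f a < f b) -> rk le x <= f x.
Proof.
move=> hf; have [C [hc hb hs]] := rk_ex x.
rewrite -ltnS -hs.
have hu : uniq (map f (enum C)).
  rewrite map_inj_in_uniq ?enum_uniq // => a b; rewrite !mem_enum => ha hb' hab.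
  apply/eqP; apply/negP=> /negP hne.
  move/forallP: hc => /(_ a); rewrite ha /= => /forallP/(_ b); rewrite hb' /=.
  case/orP=> h.
    by have := hf _ _ h hne; rewrite hab ltnn.
  by have := hf _ _ h; rewrite eq_sym hne hab ltnn; move/(_ isT).
have := uniq_leq_size (s2 := iota 0 (f x).+1) hu.
rewrite size_map size_iota -cardE; apply => n /mapP[a]; rewrite mem_enum => ha ->.
rewrite mem_iota /= add0n ltnS.
move/forallP: hb => /(_ a); rewrite ha /= => hax.
case: (eqVneq a x) => [->//|hne]; exact: ltnW (hf _ _ hax hne).
Qed.
End Gen.

Section Gen2.
Variables (T T' : finType) (le : rel T) (le' : rel T').
Hypotheses (lerefl' : reflexive le') (letr : transitive le).

Lemma rk_emb (h : T' -> T) (y : T') (x : T) :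
  injective h -> (forall a b, le' a b -> le (h a) (h b)) -> le (h y) x ->
  rk le' y <= rk le x.
Proof.
move=> hi hm hyx; have [C [hc hb hs]] := rk_ex lerefl' y.
rewrite -ltnS -hs -(card_imset _ hi); apply: rk_chain.
  apply/forallP=> a; apply/implyP=> /imsetP[a' ha' ->].
  apply/forallP=> b; apply/implyP=> /imsetP[b' hb' ->].
  move/forallP: hc => /(_ a'); rewrite ha' /= => /forallP/(_ b'); rewrite hb' /=.
  by case/orP=> hh; rewrite (hm _ _ hh) ?orbT.
apply/forallP=> a; apply/implyP=> /imsetP[a' ha' ->].
move/forallP: hb => /(_ a'); rewrite ha' /= => hh; exact: letr (hm _ _ hh) hyx.
Qed.
End Gen2.

Section Main.
Context {dL dE : Order.disp_t} {L : finTBLatticeType dL} {E : finTBLatticeType dE}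
  (iota : L -> E) (F : L).
Hypotheses (hemb : embedding iota)
  (hFi : exists Fi : E, modular_flat Fi /\
    (forall y : E, (exists x : L, iota x = y) <-> (y <= Fi)%O))
  (cF : coatom F) (mF : modular_flat F).

Local Notation rkL := (rk (<=%O : rel L)).
Local Notation rkE := (rk (<=%O : rel E)).

Lemma rkL_lt (x y : L) : (x <= y)%O -> x != y -> rkL x < rkL y.
Proof. exact: (rk_lt lexx le_trans le_anti). Qed.
Lemma rkL_le (x y : L) : (x <= y)%O -> rkL x <= rkL y.
Proof. exact: (rk_le lexx le_trans le_anti). Qed.
Lemma rkE_lt (x y : E) : (x <= y)%O -> x != y -> rkE x < rkE y.
Proof. exact: (rk_lt lexx le_trans le_anti). Qed.
Lemma rkE_le (x y : E) : (x <= y)%O -> rkE x <= rkE y.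
Proof. exact: (rk_le lexx le_trans le_anti). Qed.

Lemma iota_refl x y : (iota x <= iota y)%O -> (x <= y)%O.
Proof.
case: hemb => inj _ mor _ h.
have : iota (x `|` y)%O = iota y by rewrite mor join_r.
by move/inj => <-; exact: leUl.
Qed.

Lemma iota_mono x y : (x <= y)%O -> (iota x <= iota y)%O.
Proof. by case: hemb => _ hm _ _; apply: hm. Qed.

Lemma iota_join x y : iota (x `|` y)%O = (iota x `|` iota y)%O.
Proof. by case: hemb => _ _ mor _; apply: mor. Qed.

Lemma iota_img (y : E) : (y <= iota F)%O -> exists x, iota x = y.
Proof.
have [Fi [_ h]] := hFi => hy; apply/h.
apply: le_trans hy _; apply/h; by exists F.
Qed.

Lemma iota_meet x y : iota (x `&` y)%O = (iota x `&` iota y)%O.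
Proof.
have [Fi [_ h]] := hFi.
have : (iota x `&` iota y <= Fi)%O.
  apply: le_trans (leIl _ _) _; apply/h; by exists x.
move/h=> [z hz]; apply: le_anti; apply/andP; split.
  by rewrite lexI !iota_mono ?leIl ?leIr.
rewrite -hz; apply: iota_mono; rewrite lexI; apply/andP; split;
  apply: iota_refl; rewrite hz ?leIl ?leIr //.
Qed.

Definition g (c : E) : L := odflt \bot%O [pick x | iota x == (c `&` iota F)%O].

Lemma gP c : iota (g c) = (c `&` iota F)%O.
Proof.
rewrite /g; case: pickP => [x /eqP //|H].
have [x hx] := iota_img (leIr (iota F) c).
by move: (H x); rewrite hx eqxx.
Qed.

Lemma g_leF c : (g c <= F)%O.
Proof. by apply: iota_refl; rewrite gP leIr. Qed.

Lemma ginP c : inP iota F (g c, c).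
Proof. by rewrite /inP /= meet_l ?g_leF // gP. Qed.

Definition hP (c : E) : Pty iota F := exist _ (g c, c) (ginP c).

Lemma Ple_refl : reflexive (Ple iota F).
Proof. by move=> X; rewrite /Ple !lexx. Qed.

Lemma Ple_trans : transitive (Ple iota F).
Proof.
move=> Y X Z /andP[h1 h2] /andP[h3 h4]; apply/andP; split;
  [exact: le_trans h1 h3 | exact: le_trans h2 h4].
Qed.

Lemma Ple_anti : antisymmetric (Ple iota F).
Proof.
move=> [[a b] pa] [[c d] pc] /andP[/andP[h1 h2] /andP[h3 h4]].
apply: val_inj => /=; congr pair; apply: le_anti; rewrite ?h1 ?h2 ?h3 ?h4 //.
Qed.

Lemma inPE (X : Pty iota F) : iota ((val X).1 `&` F)%O = ((val X).2 `&` iota F)%O.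
Proof. exact/eqP/(valP X). Qed.

Lemma Klem (A : L) : ~~ (A <= F)%O -> (rkL (A `&` F)%O).+1 = rkL A.
Proof.
move=> nA; have hm := mF A.
have hlt : rkL F < rkL (F `|` A)%O.
  apply: rkL_lt; first exact: leUl.
  apply/negP=> /eqP hE; move: nA; rewrite hE leUr //.
have hle : rkL (F `|` A)%O <= rkL \top%O.
  by apply: rkL_le; exact: lex1.
have hc := cF; rewrite /coatom in hc; move: hm; rewrite meetC; lia.
Qed.

Lemma M_char (X : Pty iota F) : Mpred iota F X ->
  ~~ ((val X).1 <= F)%O /\ (iota (val X).1 <= (val X).2)%O.
Proof.
case/existsP => H /and4P[_ hHF hHA hHB].
set A := (val X).1.
have nA : ~~ (A <= F)%O.
  by apply: contra hHF => hAF; exact: le_trans hHA hAF.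
split => //.
set D := ((A `&` F) `|` H)%O.
have hDA : (D <= A)%O by rewrite leUx leIl hHA.
have hlt : rkL (A `&` F)%O < rkL D.
  apply: rkL_lt; first exact: leUl.
  apply/negP=> /eqP hE; move/negP: hHF; apply.
  have : (H <= D)%O by exact: leUr.
  by rewrite -hE => hh; exact: le_trans hh (leIr _ _).
have hDE : D = A.
  case: (eqVneq D A) => // hne.
  have := rkL_lt hDA hne; have := Klem nA; move=> h1 h2. lia.
rewrite -hDE /D iota_join leUx hHB andbT.
have := inPE X; rewrite -/A => ->; exact: leIl.
Qed.

Local Notation rkP := (rk (Ple iota F)).

Definition fP (X : Pty iota F) : nat :=
  rkE (val X).2 + (if ((val X).1 <= F)%O then 0 else 1).

Lemma fP_strict (a b : Pty iota F) : Ple iota F a b -> a != b -> fP a < fP b.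
Proof.
move: a b => [[A B] pa] [[A' B'] pb] /andP[/= h1 h2] hne.
have ia := inPE (exist _ (A, B) pa); have ib := inPE (exist _ (A', B') pb).
rewrite /= in ia ib.
rewrite /fP /=.
case: (eqVneq B B') => hB.
  subst B'.
  have hA : A != A'.
    by apply: contraNneq hne => hA; subst A'; apply/eqP/val_inj.
  case hA'F: (A' <= F)%O.
    have hAF : (A <= F)%O := le_trans h1 hA'F.
    rewrite meet_l // in ia; rewrite meet_l // in ib.
    by case: hemb => inj _ _ _; rewrite (inj _ _ (etrans ia (esym ib))) eqxx in hA.
  case hAF: (A <= F)%O; first lia.
  have hm : (A `&` F)%O = (A' `&` F)%O.
    by case: hemb => inj _ _ _; apply: inj; rewrite ia ib.
  have := Klem (negbT hAF); have := Klem (negbT hA'F); rewrite hm => e1 e2.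
  have := rkL_lt h1 hA; lia.
have hr := rkE_lt h2 hB.
case hA'F: (A' <= F)%O.
  by rewrite (le_trans h1 hA'F) !addn0.
case: (A <= F)%O; lia.
Qed.

Lemma rkP_ub (X : Pty iota F) : rkP X <= fP X.
Proof. exact: (rk_ub Ple_refl X fP_strict). Qed.

Lemma rkP_lb (X : Pty iota F) : ~~ ((val X).1 <= F)%O -> (rkE (val X).2).+1 <= rkP X.
Proof.
move=> nA.
have hinj : injective hP.
  by move=> a b /(congr1 (fun p : Pty iota F => (val p).2)).
have hmon : forall a b : E, (a <= b)%O -> Ple iota F (hP a) (hP b).
  move=> a b hab; rewrite /Ple /= hab andbT.
  by apply: iota_refl; rewrite !gP leI2.
have h1 : rkE (val X).2 <= rkP (hP (val X).2).
  exact: (rk_emb (le' := <=%O : rel E) lexx Ple_trans hinj hmon (Ple_refl _)).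
have hle : Ple iota F (hP (val X).2) X.
  rewrite /Ple /= lexx andbT.
  apply: iota_refl; rewrite gP -inPE; apply: iota_mono; exact: leIl.
have hne : hP (val X).2 != X.
  apply/negP=> /eqP hE; move: nA; rewrite -hE /= g_leF //.
have := rk_lt Ple_refl Ple_trans Ple_anti hle hne; lia.
Qed.

Lemma rkE_semimod : geometric E -> forall x y : E,
  rkE (x `&` y)%O + rkE (x `|` y)%O <= rkE x + rkE y.
Proof. by case. Qed.

Theorem main_sec : geometric L -> geometric E ->
  modular_cut (Ple iota F) (Mpred iota F).
Proof.
move=> [_ atL _] gE; split.
  move=> X Y /existsP[H /and4P[a b c d]] /andP[h1 h2]; apply/existsP; exists H.
  by rewrite a b (le_trans c h1) (le_trans d h2).
move=> X Y Z W hX hY /and3P[hZX hZY /forallP hZmax] /and3P[hXW hYW /forallP hWmin] hrk.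
have [nA1 iA1] := M_char hX; have [nA2 iA2] := M_char hY.
case: (boolP [exists H : L, [&& atom H, ~~ (H <= F)%O & (H <= Order.meet (val X).1 (val Y).1)%O]]).
  case/existsP=> H /and3P[hat hnF hH].
  have pH : inP iota F (H, iota H) by rewrite /inP /= iota_meet.
  set Hp : Pty iota F := exist _ (H, iota H) pH.
  move: hH; rewrite lexI => /andP[hH1 hH2].
  have hHX : Ple iota F Hp X by rewrite /Ple /= hH1 (le_trans (iota_mono hH1) iA1).
  have hHY : Ple iota F Hp Y by rewrite /Ple /= hH2 (le_trans (iota_mono hH2) iA2).
  move: (hZmax Hp); rewrite hHX hHY /= => /andP[/= z1 z2].
  by apply/existsP; exists H; rewrite hat hnF z1 z2.
move=> hno; exfalso.
have hAF : ((val X).1 `&` (val Y).1 <= F)%O.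
  rewrite (atL ((val X).1 `&` (val Y).1)%O); apply/joinsP => a /andP[ha hle].
  apply: contraNT hno => haF; apply/existsP; exists a; by rewrite ha haF hle.
move: hZX hZY => /andP[zx1 zx2] /andP[zy1 zy2].
have hZ1 : ((val Z).1 <= F)%O by apply: le_trans hAF; rewrite lexI zx1 zy1.
have hZ2 : ((val Z).2 <= (val X).2 `&` (val Y).2)%O by rewrite lexI zx2 zy2.
have rZ : rkP Z <= rkE ((val X).2 `&` (val Y).2)%O.
  apply: leq_trans (rkP_ub Z) _; rewrite /fP hZ1 addn0; exact: rkE_le.
set B := ((val X).2 `|` (val Y).2)%O.
set A' := (((val X).1 `|` (val Y).1) `|` g B)%O.
have hA'F : (A' `&` F)%O = g B.
  apply: le_anti; apply/andP; split; last by rewrite lexI leUr g_leF.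
  apply: iota_refl; rewrite iota_meet gP; apply: leI2 => //.
  rewrite /A' !iota_join !leUx gP leIl andbT.
  by rewrite (le_trans iA1 (leUl _ _)) (le_trans iA2 (leUr _ _)).
have pW : inP iota F (A', B) by rewrite /inP /= hA'F gP.
set Wp : Pty iota F := exist _ (A', B) pW.
have hXW' : Ple iota F X Wp.
  by rewrite /Ple /= leUl /A' (le_trans (leUl _ (val Y).1) (leUl _ _)).
have hYW' : Ple iota F Y Wp.
  by rewrite /Ple /= leUr /A' (le_trans (leUr _ (val X).1) (leUl _ _)).
move: (hWmin Wp); rewrite hXW' hYW' /= => /andP[/= w1 w2].
have rW : rkP W <= (rkE B).+1.
  apply: leq_trans (rkP_ub W) _; rewrite /fP.
  have h := rkE_le w2.
  case: ifP => _; [rewrite addn0; exact: leq_trans h (leqnSn _) | by rewrite addn1 ltnS].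
have rX := rkP_lb nA1; have rY := rkP_lb nA2.
have sm := rkE_semimod gE (val X).2 (val Y).2.
rewrite -/B in sm.
have e1 := leq_add rX rY; rewrite hrk in e1.
have e3 := leq_trans e1 (leq_add rZ rW).
rewrite addSn addnS addnS ltnS in e3.
by have := leq_trans e3 sm; rewrite ltnn.
Qed.
End Main.

Theorem mainTheorem14 (dL dE : Order.disp_t)
  (L : finTBLatticeType dL) (E : finTBLatticeType dE)
  (iota : L -> E) (F : L) :
  geometric L -> geometric E -> modular_extension iota ->
  coatom F -> modular_flat F ->
  modular_cut (Ple iota F) (Mpred iota F).
Proof.
move=> gL gE [hemb hFi] cF mF.
exact: (main_sec hemb hFi cF mF gL gE).
Qed.
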